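(* The function $g:2^V\to\mathbb{R}$, $g(A)=h(A)+\frac1L f(A)$, is non-decreasing and submodular.
   Context: $G=(V,E,w)$ is a finite simple undirected graph with positive rational edge weights and no isolated vertices. $N_A(v)=N(v)\cap A$, $W_A(v)=\sum_{u\in N_A(v)}w_{(v,u)}$, $W(v)=W_V(v)$. $h(A)=\sum_{v\in V}h_A(v)$ with $h_A(v)=W(v)/2$ if $v\in A$ or $W_A(v)\ge W(v)/2$, and $h_A(v)=W_A(v)$ otherwise. $f(A)=\sum_{v\in V}\delta_A(v)$ with $\delta_A(v)=1$ if $|N_A(v)|>0$ and $0$ otherwise. For $v$ with incident edge weights $w_1,\dots,w_d$, write $w_0=W(v)/2$ and each $w_i$ as a reduced fraction $p_i/q_i$; $l(v)=\mathrm{lcm}\{q_0,\dots,q_d\}$, $L=\max_v l(v)$. *)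

(* Defs.v *)
From mathcomp Require Import all_boot all_order all_algebra.
Set Implicit Arguments. Unset Strict Implicit. Unset Printing Implicit Defensive.
Import Order.TTheory GRing.Theory Num.Theory.
Local Open Scope ring_scope.

(* A weighted simple graph on a finite vertex type V: adjacency relation e
   (symmetric, irreflexive), rational weights w (only used on edges). *)
Section Defs.
Variables (V : finType) (e : rel V) (w : V -> V -> rat).

Definition nbA (A : {set V}) (v : V) : {set V} := [set u in A | e v u].

Definition WA (A : {set V}) (v : V) : rat := \sum_(u in nbA A v) w v u.

Definition Wt (v : V) : rat := WA [set: V] v.

Definition hA (A : {set V}) (v : V) : rat :=
  if (v \in A) || (Wt v / 2%:R <= WA A v) then Wt v / 2%:R else WA A v.

Definition h (A : {set V}) : rat := \sum_(v : V) hA A v.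

Definition deltaA (A : {set V}) (v : V) : nat := (0 < #|nbA A v|)%N.

Definition f (A : {set V}) : nat := (\sum_(v : V) deltaA A v)%N.

(* denominator of a rational in lowest terms (denq is normalized, > 0) *)
Definition den (q : rat) : nat := `|denq q|%N.

Definition lv (v : V) : nat :=
  lcmn (den (Wt v / 2%:R)) (\big[lcmn/1%N]_(u | e v u) den (w v u)).

Definition Lmax : nat := (\max_(v : V) lv v)%N.

Definition g (A : {set V}) : rat := h A + (f A)%:R / (Lmax%:R).

End Defs.

(* Main.v *)
Require Import Defs.
From mathcomp Require Import all_boot all_order all_algebra.
From mathcomp Require Import lra zify.
Import Order.TTheory GRing.Theory Num.Theory.
Local Open Scope ring_scope.

Ltac fixh := repeat match goal with
 | H : is_true (~~ (?x <= ?y)) |- _ => rewrite -ltNge in H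
 | H : (?x <= ?y) = false |- _ => move/negbT: H => H
 | H : (?x <= ?y) = true |- _ => change (is_true (x <= y)) in H
 end.
Ltac splitifs := repeat (let H := fresh "H" in case: ifP => H); fixh.
Definition F (c a : rat) (p : bool) := if p || (c <= a) then c else a.
Lemma F_mono (c a b : rat) (pa pb : bool) : a <= b -> (pa -> pb) ->
  F c a pa <= F c b pb.
Proof.
rewrite /F => ab /implyP; case: pa; case: pb => //= _; splitifs; lra.
Qed.
Lemma F_sub (c a b u i : rat) (pa pb : bool) : u + i = a + b -> i <= a -> i <= b ->
  F c u (pa || pb) + F c i (pa && pb) <= F c a pa + F c b pb.
Proof.
rewrite /F => E ia ib; case: pa; case: pb => /=; splitifs; lra.
Qed.

Section H.
Variables (V : finType) (e : rel V) (w : V -> V -> rat).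
Hypothesis w_pos : forall u v, e u v -> 0 < w u v.

Lemma WAE (A : {set V}) v :
  WA e w A v = \sum_(u : V) (if (u \in A) && e v u then w v u else 0).
Proof. by rewrite /WA big_mkcond; apply: eq_bigr => u _; rewrite inE. Qed.

Lemma WA_mod (A B : {set V}) v : WA e w (A :|: B) v + WA e w (A :&: B) v = WA e w A v + WA e w B v.
Proof.
rewrite !WAE -!big_split; apply: eq_bigr => u _ /=.
rewrite !inE; case: (u \in A); case: (u \in B); case: (e v u) => /=; rewrite ?addr0 ?add0r //.
Qed.

Lemma WA_mono (A B : {set V}) v : A \subset B -> WA e w A v <= WA e w B v.
Proof.
move=> /subsetP sAB; rewrite !WAE; apply: ler_sum => u _.
case hA: (u \in A) => /=.
  by rewrite (sAB _ hA) /=; case: (e v u).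
case: ifP => // /andP [_ evu]; exact/ltW/w_pos.
Qed.

Lemma hA_mono (A B : {set V}) v : A \subset B -> hA e w A v <= hA e w B v.
Proof.
move=> sAB; apply: F_mono; first exact: WA_mono.
by move/(subsetP sAB).
Qed.

Lemma hA_sub (A B : {set V}) v :
  hA e w (A :|: B) v + hA e w (A :&: B) v <= hA e w A v + hA e w B v.
Proof.
have := @F_sub (Wt e w v / 2%:R) _ _ _ _ (v \in A) (v \in B) (WA_mod A B v)
  (@WA_mono _ _ v (subsetIl A B)) (@WA_mono _ _ v (subsetIr A B)).
by rewrite /F /hA !inE.
Qed.

Lemma nb_sub (A B : {set V}) v : A \subset B -> nbA e A v \subset nbA e B v.
Proof.
move/subsetP=> s; apply/subsetP => u; rewrite !inE => /andP[/s -> ->]; done.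
Qed.

Lemma delta_mono (A B : {set V}) v : A \subset B -> (deltaA e A v <= deltaA e B v)%N.
Proof.
move=> sAB; have := subset_leq_card (@nb_sub _ _ v sAB); rewrite /deltaA.
by case: (ltnP 0 #|nbA e A v|) => h1; case: (ltnP 0 #|nbA e B v|) => h2 //= h3;
  move: (leq_trans h1 h3); rewrite ltnNge h2.
Qed.

Lemma delta_sub (A B : {set V}) v :
  (deltaA e (A :|: B) v + deltaA e (A :&: B) v <= deltaA e A v + deltaA e B v)%N.
Proof.
have U: nbA e (A :|: B) v = nbA e A v :|: nbA e B v.
  by apply/setP => u; rewrite !inE andb_orl.
have h1 := @delta_mono _ _ v (subsetIl A B).
have h2 := @delta_mono _ _ v (subsetIr A B).
move: h1 h2; rewrite /deltaA U !card_gt0 setU_eq0 negb_and.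
by case: (nbA e A v == set0); case: (nbA e B v == set0);
  case: (nbA e (A :&: B) v == set0).
Qed.

End H.

Theorem mainTheorem15 (V : finType) (e : rel V) (w : V -> V -> rat)
  (e_irr : irreflexive e) (e_sym : symmetric e)
  (w_sym : forall u v, e u v -> w u v = w v u)
  (w_pos : forall u v, e u v -> 0 < w u v)
  (no_isolated : forall v : V, exists u, e v u) :
  (forall A B : {set V}, A \subset B -> g e w A <= g e w B) /\
  (forall A B : {set V}, g e w (A :|: B) + g e w (A :&: B) <= g e w A + g e w B).
Proof.
have L0 : 0 <= (Lmax e w)%:R^-1 :> rat by rewrite invr_ge0 ler0n.
split=> [A B sAB | A B]; rewrite /g.
  apply: lerD.
    by apply: ler_sum => v _; apply: hA_mono.
  apply: ler_wpM2r => //; rewrite ler_nat; apply: leq_sum => v _.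
  exact: delta_mono.
rewrite addrACA [X in _ <= X]addrACA; apply: lerD.
  rewrite /h -!big_split; apply: ler_sum => v _; exact: hA_sub.
rewrite -!mulrDl -!natrD; apply: ler_wpM2r => //; rewrite ler_nat /f -!big_split.
by apply: leq_sum => v _; apply: delta_sub.
Qed.
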